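(* For every graph $G$ there exists a graph $H$ such that $|H|=|G|+1$, $G$ is an induced subgraph of $H$, and $\alpha_{\mathrm{od}}(H)=\alpha(H)=\alpha(G)+1$.
   Context: An odd independent set in $G=(V,E)$ is an independent set $S$ such that every $v\in V\setminus S$ has either no neighbor or an odd number of neighbors in $S$; $\alpha_{\mathrm{od}}(G)$ is its maximum size; $\alpha$ is the independence number; $|G|$ is the number of vertices. *)

(* Defs.v *)
From mathcomp Require Import all_boot.
Set Implicit Arguments. Unset Strict Implicit. Unset Printing Implicit Defensive.

Definition simple_graph (T : finType) (e : rel T) : Prop :=
  symmetric e /\ irreflexive e.

Definition nbhd_in (T : finType) (e : rel T) (S : {set T}) (v : T) : {set T} :=
  [set u in S | e v u].

Definition independent (T : finType) (e : rel T) (S : {set T}) : bool :=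
  [forall x in S, forall y in S, ~~ e x y].

Definition odd_independent (T : finType) (e : rel T) (S : {set T}) : bool :=
  independent e S &&
  [forall v in ~: S, (#|nbhd_in e S v| == 0) || odd #|nbhd_in e S v|].

Definition alpha (T : finType) (e : rel T) : nat :=
  \max_(S : {set T} | independent e S) #|S|.

Definition alpha_od (T : finType) (e : rel T) : nat :=
  \max_(S : {set T} | odd_independent e S) #|S|.

Definition induced_embedding (T U : finType) (eG : rel T) (eH : rel U)
  (f : T -> U) : Prop :=
  injective f /\ forall x y, eH (f x) (f y) = eG x y.

(* Main.v *)
Require Import Defs.
From mathcomp Require Import all_boot.
Set Implicit Arguments. Unset Strict Implicit.

Definition extH (T : finType) (eG : rel T) (E : {set T}) : rel (option T) :=
  fun a b => match a, b with
  | Some x, Some y => eG x y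
  | None, Some y => y \in E
  | Some x, None => x \in E
  | None, None => false
  end.

Lemma alpha_max (T : finType) (e : rel T) :
  exists2 S : {set T}, independent e S & alpha e = #|S|.
Proof.
have h : 0 < #|[pred S : {set T} | independent e S]|.
  apply/card_gt0P; exists set0; rewrite inE /independent.
  by apply/forallP => x; rewrite inE.
have [S HS Heq] := eq_bigmax_cond (fun S : {set T} => #|S|) h.
by exists S; [rewrite inE in HS | exact: Heq].
Qed.

Lemma alpha_ge (T : finType) (e : rel T) S : independent e S -> #|S| <= alpha e.
Proof. by move=> h; exact: (@leq_bigmax_cond _ (fun S : {set T} => independent e S) (fun S : {set T} => #|S|) S h). Qed.

Lemma alpha_od_le (T : finType) (e : rel T) : alpha_od e <= alpha e.
Proof.
apply/bigmax_leqP => S /andP [h _]; exact: alpha_ge.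
Qed.

Theorem proposition17 (T : finType) (eG : rel T) :
  simple_graph eG ->
  exists (U : finType) (eH : rel U) (f : T -> U),
    [/\ simple_graph eH,
        #|U| = #|T| + 1,
        induced_embedding eG eH f,
        alpha_od eH = alpha eH
      & alpha eH = alpha eG + 1].
Proof.
move=> [sym irr].
have [S indS aS] := alpha_max eG.
pose E := [set y | (y \notin S) && ~~ odd #|nbhd_in eG S y|].
have EP : forall z, (z \in E) = (z \notin S) && ~~ odd #|nbhd_in eG S z|.
  by move=> z; rewrite inE.
clearbody E.
pose eH := extH eG E.
pose S' := None |: [set Some x | x in S].
have indS' : independent eH S'.
  apply/forallP => a; apply/implyP => Ha; apply/forallP => b; apply/implyP => Hb.
  move: Ha Hb; rewrite !inE.
  case: a => [x|] /=; case: b => [y|] //=.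
  - move=> /imsetP [x' Hx' [->]] /imsetP [y' Hy' [->]].
    by move/forallP: indS => /(_ x') /implyP /(_ Hx') /forallP /(_ y') /implyP /(_ Hy').
  - by move=> /imsetP [x' Hx' [->]] _; rewrite EP Hx'.
  - by move=> _ /imsetP [x' Hx' [->]]; rewrite EP Hx'.
have cardS' : #|S'| = #|S| + 1.
  rewrite cardsU1 card_imset; last by move=> ? ? [].
  have -> : (None \notin [set Some x | x in S]) by apply/imsetP => [[? _ //]].
  by rewrite addnC.
have oddS' : odd_independent eH S'.
  rewrite /odd_independent indS' /=.
  apply/forallP => a; apply/implyP; rewrite !inE.
  case: a => [y|] //=; rewrite (mem_imset _ _ Some_inj) => yS.
  have -> : nbhd_in eH S' (Some y) =
     (if y \in E then None |: [set Some x | x in nbhd_in eG S y]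
      else [set Some x | x in nbhd_in eG S y]).
    apply/setP => [[x|]]; rewrite /nbhd_in !inE /=.
    + rewrite (mem_imset _ _ Some_inj).
      case: (y \in E); rewrite ?in_setU1 (mem_imset _ _ Some_inj) inE //.
    + case: (y \in E) => //=; rewrite ?inE //.
      by apply/esym/negbTE/imsetP => [[? _ //]].
  have nN : None \notin [set Some x | x in nbhd_in eG S y] by apply/imsetP => [[? _ //]].
  rewrite EP yS /=.
  case: (boolP (odd _)) => ho /=.
  + by rewrite card_imset ?ho ?orbT //; move=> ? ? [].
  + by rewrite cardsU1 nN card_imset /= ?ho ?orbT //; move=> ? ? [].
have aH : alpha eH = alpha eG + 1.
  apply/eqP; rewrite eqn_leq; apply/andP; split; last by rewrite aS -cardS' alpha_ge.
  apply/bigmax_leqP => X indX.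
  pose X' := [set x | Some x \in X].
  have indX' : independent eG X'.
    apply/forallP => x; apply/implyP; rewrite inE => Hx; apply/forallP => y;
    apply/implyP; rewrite inE => Hy.
    by move/forallP: indX => /(_ (Some x)) /implyP /(_ Hx) /forallP /(_ (Some y)) /implyP /(_ Hy).
  have sub : X \subset None |: [set Some x | x in X'].
    apply/subsetP => [[x|]] Hx; rewrite !inE //.
    by rewrite (mem_imset _ _ Some_inj) inE Hx orbT.
  apply: (leq_trans (subset_leq_card sub)).
  rewrite cardsU1 card_imset; last by move=> ? ? [].
  rewrite addnC leq_add ?alpha_ge //; by case: (_ \notin _).
exists (option T), eH, Some; split.
- split.
  + by move=> [x|] [y|] //=; rewrite sym.
  + by move=> [x|] //=; rewrite irr.
- by rewrite card_option addn1.
- by split; [move=> ? ? [] | ].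
- apply/eqP; rewrite eqn_leq alpha_od_le /= aH aS -cardS'.
  exact: (@leq_bigmax_cond _ (fun S : {set option T} => odd_independent eH S) (fun S : {set option T} => #|S|) S' oddS').
- exact: aH.
Qed.
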